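(* Let $g$ be a continuous $g$-function on $X=A^{\mathbb{N}}$ and let $\mu$ be a compatible $g$-measure. For each $\ell\in\mathbb{N}$ let $\mu_\ell$ be the canonical $\ell$-step Markov approximation to $\mu$. Then $\mu_\ell\to\mu$ as $\ell\to\infty$ in the projective distance $\rho$; moreover \[ \rho(\mu_\ell,\mu)\le \operatorname{var}_\ell(\log\circ g)\quad\text{for all }\ell\in\mathbb{N}. \]
   Context: $A$ is a finite alphabet, $X=A^{\mathbb{N}}$ with product topology, $T$ the left shift, $\pmb{x}_n^m=x_nx_{n+1}\cdots x_m$, and $[\pmb{a}]=\{\pmb{x}: \pmb{x}_1^n=\pmb{a}\}$ for $\pmb{a}\in A^n$. $\mathcal{M}^+(X)$ is the set of Borel probability measures giving positive mass to every cylinder. Projective distance: $\rho(\mu,\nu)=\sup_{n}\max_{\pmb{a}\in A^n}\frac1n|\log(\mu[\pmb{a}]/\nu[\pmb{a}])|$. A $g$-function is a Borel function $g:X\to(0,1)$ with $\sum_{a\in A}g(a x_2x_3\cdots)=1$ for all $\pmb{x}\in X$. A compatible $g$-measure is a $T$-invariant $\mu\in\mathcal{M}^+(X)$ such that $\lim_{n\to\infty}\mu[a_1\pmb{a}_2^n]/\mu[\pmb{a}_2^n]=g(\pmb{a})$ for all $\pmb{a}\in X$. The canonical $\ell$-step Markov approximation $\mu_\ell$ is the measure with $\mu_\ell[\pmb{a}_1^n]=\mu[\pmb{a}_1^n]$ for $n\le \ell$ and $\mu_\ell[\pmb{a}_1^n]=\mu[\pmb{a}_1^\ell]\prod_{j=1}^{n-\ell}\mu[\pmb{a}_j^{j+\ell}]/\mu[\pmb{a}_j^{j+\ell-1}]$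 for $n\ge\ell$. For $\phi:X\to\mathbb{R}$, $\operatorname{var}_\ell\phi=\max_{\pmb{a}\in A^\ell}\{\sup_{\pmb{x}\in[\pmb{a}]}\phi(\pmb{x})-\inf_{\pmb{x}\in[\pmb{a}]}\phi(\pmb{x})\}$. *)

(* Defs.v *)
From HB Require Import structures.
From mathcomp Require Import all_boot all_order all_algebra.
From mathcomp Require Import all_classical all_reals all_analysis.
Set Implicit Arguments. Unset Strict Implicit. Unset Printing Implicit Defensive.
Import Order.TTheory GRing.Theory Num.Theory.
Import numFieldNormedType.Exports.
Local Open Scope classical_set_scope.
Local Open Scope ring_scope.

#[short(type="finPointedType")]
HB.structure Definition FinPointed := {T of Finite T & isPointed T}.

(* X = A^N with the product topology of the discrete topology on A.
   Coordinate x_{i+1} of the paper is [x i] here. *)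
Definition Xt (A : finPointedType) : topologicalType :=
  prod_topology (fun _ : nat => discrete_topology A).

Definition XB (A : finPointedType) := g_sigma_algebraType (@open (Xt A)).

Definition shift (A : finPointedType) (x : Xt A) : Xt A := fun n => x n.+1.

Definition scons (A : finPointedType) (a : A) (x : Xt A) : Xt A :=
  fun n => if n is k.+1 then x k else a.

Definition prefix (A : finPointedType) (x : Xt A) (n : nat) : seq A := mkseq x n.

Definition cyl (A : finPointedType) (a : seq A) : set (Xt A) :=
  [set x | prefix x (size a) = a].

Definition mass (R : realType) (A : finPointedType) (mu : probability (XB A) R)
  (a : seq A) : R := fine (mu (cyl a : set (XB A))).

Definition positive_on_cylinders (R : realType) (A : finPointedType)
  (mu : probability (XB A) R) : Prop :=
  forall a : seq A, (0 < mu (cyl a : set (XB A)))%E.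

Definition shift_invariant (R : realType) (A : finPointedType)
  (mu : probability (XB A) R) : Prop :=
  forall B : set (XB A), measurable B ->
    mu ((@shift A : XB A -> XB A) @^-1` B) = mu B.

Definition g_function (R : realType) (A : finPointedType) (g : Xt A -> R) : Prop :=
  [/\ measurable_fun [set: XB A] (g : XB A -> R),
      (forall x, 0 < g x < 1) &
      (forall x, \sum_(a : A) g (scons a (shift x)) = 1)].

Definition compatible_g_measure (R : realType) (A : finPointedType)
  (g : Xt A -> R) (mu : probability (XB A) R) : Prop :=
  [/\ shift_invariant mu, positive_on_cylinders mu &
      forall x : Xt A,
        (fun n => mass mu (prefix x n.+1) / mass mu (prefix (shift x) n))
          @ \oo --> g x].

(* Cylinder values of the canonical l-step Markov approximation of the
   cylinder function p (p a = mu[a]). *)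
Definition markov_approx (R : realType) (A : finPointedType) (p : seq A -> R)
  (l : nat) (a : seq A) : R :=
  if (size a <= l)%N then p a
  else p (take l a) *
       \prod_(0 <= j < size a - l)
          (p (take l.+1 (drop j a)) / p (take l (drop j a))).

Definition rho (R : realType) (A : finPointedType) (p q : seq A -> R) : \bar R :=
  ereal_sup [set ((`|ln (p a / q a)| / (size a)%:R)%:E) | a in
               [set a : seq A | (0 < size a)%N]].

Definition var (R : realType) (A : finPointedType) (l : nat) (phi : Xt A -> R) : R :=
  \big[Num.max/0]_(a : l.-tuple A)
     (sup (phi @` cyl (a : seq A)) - inf (phi @` cyl (a : seq A))).

(* Main.v *)
Require Import Defs.
From HB Require Import structures.
From mathcomp Require Import all_boot all_order all_algebra.
From mathcomp Require Import all_classical all_reals all_analysis.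
Import Order.TTheory GRing.Theory Num.Theory.
Import numFieldNormedType.Exports.
Local Open Scope classical_set_scope.
Local Open Scope ring_scope.
Set Implicit Arguments. Unset Strict Implicit. Unset Printing Implicit Defensive.
From mathcomp Require Import lra ring zify.

Notation pfx := Defs.prefix.

Lemma size_prefix (A : finPointedType) (x : Xt A) n : size (pfx x n) = n.
Proof. by rewrite /prefix size_mkseq. Qed.

Lemma nth_prefix (A : finPointedType) (x : Xt A) n i d :
  (i < n)%N -> nth d (pfx x n) i = x i.
Proof. by move=> hi; rewrite /prefix nth_mkseq. Qed.

Lemma cylP (A : finPointedType) (w : seq A) (x : Xt A) :
  cyl w x <-> (forall i, (i < size w)%N -> x i = nth point w i).
Proof.
rewrite /cyl /=; split.
  by move=> h i hi; rewrite -h nth_prefix.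
move=> h; apply: (@eq_from_nth _ point); first by rewrite size_prefix.
by move=> i; rewrite size_prefix => hi; rewrite nth_prefix // h.
Qed.

Lemma cyl_rcons (A : finPointedType) (w : seq A) c :
  cyl (rcons w c) = cyl w `&` (fun x => x (size w) = c).
Proof.
apply/seteqP; split => x.
  move/cylP => h; split.
    apply/cylP => i hi; rewrite h ?size_rcons 1?ltnS 1?ltnW //.
    by rewrite nth_rcons hi.
  by rewrite h ?size_rcons // nth_rcons ltnn eqxx.
case => /cylP h1 h2; apply/cylP => i; rewrite size_rcons ltnS leq_eqVlt.
case/orP => [/eqP ->|hi]; first by rewrite nth_rcons ltnn eqxx.
by rewrite nth_rcons hi h1.
Qed.

Lemma cyl_nil (A : finPointedType) : cyl ([::] : seq A) = setT.
Proof. by apply/seteqP; split => x // _; apply/cylP. Qed.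

Lemma open_coord (A : finPointedType) n (c : A) :
  open ((fun x : Xt A => x n) @^-1` [set c]).
Proof.
have hc := @proj_continuous nat (fun=> discrete_topology A) n.
exact: ((@continuousP (Xt A) (discrete_topology A) (fun x : Xt A => x n)).1 hc [set c] (discrete_open _)).
Qed.

Lemma open_cyl (A : finPointedType) (w : seq A) : open (cyl w).
Proof.
elim/last_ind: w => [|w c ih]; first by rewrite cyl_nil; exact: openT.
rewrite cyl_rcons; apply: openI => //; exact: open_coord.
Qed.

Lemma meas_cyl (A : finPointedType) (w : seq A) :
  measurable (cyl w : set (XB A)).
Proof. by apply: sub_gen_smallest; exact: open_cyl. Qed.

Lemma mass_fin (R : realType) (A : finPointedType) (mu : probability (XB A) R)
  (w : seq A) : mu (cyl w : set (XB A)) \is a fin_num.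
Proof.
rewrite ge0_fin_numE ?measure_ge0 //.
by apply: (le_lt_trans (probability_le1 mu (meas_cyl w))); exact: ltey.
Qed.

Lemma mass_pos (R : realType) (A : finPointedType) (mu : probability (XB A) R)
  (w : seq A) : positive_on_cylinders mu -> 0 < mass mu w.
Proof.
move=> hp; apply: fine_gt0; rewrite hp /=.
by apply: (le_lt_trans (probability_le1 mu (meas_cyl w))); exact: ltey.
Qed.

Lemma mass_add (R : realType) (A : finPointedType) (mu : probability (XB A) R)
  (w : seq A) : mass mu w = \sum_(c : A) mass mu (rcons w c).
Proof.
pose U (s : seq A) : set (XB A) := [set x | cyl w x /\ x (size w) \in s].
have key : forall s, uniq s -> measurable (U s) /\
    fine (mu (U s)) = \sum_(c <- s) mass mu (rcons w c).
  elim => [|c s ih] /=.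
    move=> _; have -> : U [::] = set0 by apply/seteqP; split => x // [].
    by rewrite measure0 big_nil.
  case/andP => cs /ih [ms es].
  have -> : U (c :: s) = (cyl (rcons w c) : set (XB A)) `|` U s.
    apply/seteqP; split => x.
      case => h1; rewrite in_cons => /orP [/eqP h2|h2]; [left|right] => //.
      by rewrite cyl_rcons.
    rewrite cyl_rcons; case => [[h1 h2]|[h1 h2]]; split => //.
      by rewrite h2 mem_head.
    by rewrite in_cons h2 orbT.
  split; first by apply: measurableU => //; exact: meas_cyl.
  have eU : mu ((cyl (rcons w c) : set (XB A)) `|` U s) =
      (mu (cyl (rcons w c) : set (XB A)) + mu (U s))%E.
    apply: measureU => //; first exact: meas_cyl.
    apply/seteqP; split => x // []; rewrite cyl_rcons /U /= => -[_ ->] [_].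
    by move/negP: cs.
  rewrite eU.
  rewrite fineD ?mass_fin //; last first.
    rewrite ge0_fin_numE ?measure_ge0 //.
    by apply: (le_lt_trans (probability_le1 mu ms)); exact: ltey.
  by rewrite big_cons es.
have [_ ] := key (enum A) (enum_uniq _).
have -> : U (enum A) = cyl w.
  by apply/seteqP; split => x; [case|split => //; rewrite mem_enum].
by rewrite /mass => ->; rewrite big_enum.
Qed.

Lemma konig (A : finPointedType) (P : seq A -> Prop) (w0 : seq A) :
  P w0 -> (forall w, P w -> exists c, P (rcons w c)) ->
  exists x : Xt A, forall k, P (pfx x (size w0 + k)).
Proof.
move=> h0 hs.
pose nx (w : seq A) : A :=
  if pselect (exists c, P (rcons w c)) is left e then projT1 (cid e) else point.
have hnx w : P w -> P (rcons w (nx w)).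
  move=> pw; rewrite /nx; case: pselect => [e|ne]; first exact: (projT2 (cid e)).
  by exfalso; apply: ne; exact: hs.
pose W k := iter k (fun w => rcons w (nx w)) w0.
have PW k : P (W k) by elim: k => //= k ih; exact: hnx.
have sW k : size (W k) = (size w0 + k)%N.
  by elim: k => [|k ih] /=; rewrite ?addn0 // size_rcons ih addnS.
have tW k m : (k <= m)%N -> take (size (W k)) (W m) = W k.
  move=> /subnK <-; elim: (m - k)%N => [|j ih]; first by rewrite add0n take_size.
  rewrite addSn /= -cats1 takel_cat ?ih // !sW leq_add2l leq_addl //.
have nW a m i : (i < size (W a))%N -> (a <= m)%N -> nth point (W a) i = nth point (W m) i.
  by move=> hi ham; rewrite -(tW a m ham) nth_take.
exists (fun i => nth point (W i.+1) i) => k.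
suff -> : pfx (fun i => nth point (W i.+1) i) (size w0 + k) = W k by [].
apply: (@eq_from_nth _ point); first by rewrite size_prefix sW.
move=> i; rewrite size_prefix => hi; rewrite nth_prefix //.
rewrite (nW i.+1 (maxn i.+1 k)) ?leq_maxl ?sW //; last by rewrite addnS ltnS leq_addl.
by rewrite (nW k (maxn i.+1 k)) ?leq_maxr ?sW.
Qed.

Lemma ratio_le (R : realType) (A : finPointedType) (f h : seq A -> R)
  (v : seq A) (G : Xt A -> R) (U : R) :
  (forall w, f w = \sum_(c : A) f (rcons w c)) ->
  (forall w, h w = \sum_(c : A) h (rcons w c)) ->
  (forall w, 0 < h w) ->
  (forall y, cyl v y -> (fun n => f (pfx y n) / h (pfx y n)) @ \oo --> G y) ->
  (forall y, cyl v y -> G y <= U) -> f v <= U * h v.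
Proof.
move=> fa ha hp hc hG.
have hv := hp v.
have key : forall e, 0 < e -> f v <= (U + e) * h v.
  move=> e e0; rewrite leNgt; apply/negP => bad.
  pose P w := [/\ (size v <= size w)%N, take (size v) w = v & (U + e) * h w < f w].
  have P0 : P v by split; rewrite ?take_size.
  have Ps : forall w, P w -> exists c, P (rcons w c).
    move=> w [sw tw lw]; apply: contrapT => nc.
    have hc' c : f (rcons w c) <= (U + e) * h (rcons w c).
      rewrite leNgt; apply/negP => l; apply: nc; exists c; split => //.
        by rewrite size_rcons ltnW.
      by rewrite -cats1 takel_cat.
    move: lw; rewrite fa ha mulr_sumr ltNge => /negP; apply.
    by apply: ler_sum => c _; exact: hc'.
  have [x hx] := konig P0 Ps.
  have xv : cyl v x.
    by case: (hx 0%N) => _; rewrite addn0 -{1}(size_prefix x (size v)) take_size.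
  have hlt : G x < U + e by rewrite (le_lt_trans (hG x xv)) // ltrDl.
  have [N _ hN] := cvgr_lt _ (hc x xv) _ hlt.
  have := hN (size v + N)%N; rewrite /= leq_addl => /(_ isT).
  case: (hx N) => _ _; rewrite -ltr_pdivlMr // => l1 l2.
  by move: (lt_trans l1 l2); rewrite ltxx.
apply/ler_addgt0Pr => e e0.
have := key (e / h v) (divr_gt0 e0 hv).
by rewrite mulrDl divfK // gt_eqF.
Qed.

Lemma pfx_scons (A : finPointedType) (c : A) (y : Xt A) n :
  pfx (scons c y) n.+1 = c :: pfx y n.
Proof.
apply: (@eq_from_nth _ point); first by rewrite size_prefix /= size_prefix.
move=> [|i]; rewrite size_prefix => hi; first by rewrite nth_prefix.
by rewrite nth_prefix //= nth_prefix.
Qed.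

Lemma shift_scons (A : finPointedType) (c : A) (y : Xt A) : Defs.shift (scons c y) = y.
Proof. by []. Qed.

Lemma cyl_scons (A : finPointedType) (c : A) (v : seq A) (y : Xt A) :
  cyl v y -> cyl (c :: v) (scons c y).
Proof.
move/cylP => h; apply/cylP => -[|i] //= hi; exact: h.
Qed.

Lemma ratio_cvg (R : realType) (A : finPointedType) (g : Xt A -> R)
  (mu : probability (XB A) R) (c : A) (y : Xt A) :
  compatible_g_measure g mu ->
  (fun n => mass mu (c :: pfx y n) / mass mu (pfx y n)) @ \oo --> g (scons c y).
Proof.
case=> _ _ /(_ (scons c y)).
by under eq_fun do rewrite pfx_scons shift_scons.
Qed.

Lemma lnratio_le (R : realType) (A : finPointedType) (g : Xt A -> R)
  (mu : probability (XB A) R) (c : A) (v : seq A) (s : R) :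
  g_function g -> compatible_g_measure g mu ->
  (forall y, cyl (c :: v) y -> ln (g y) <= s) ->
  ln (mass mu (c :: v) / mass mu v) <= s.
Proof.
move=> [_ gp _] cm hs.
have [_ pos _] := cm.
have mp w := mass_pos w pos.
have key : mass mu (c :: v) <= expR s * mass mu v.
  apply: (@ratio_le R A (fun b => mass mu (c :: b)) (mass mu) v
     (fun y => g (scons c y)) (expR s)).
  - by move=> w; rewrite mass_add.
  - by move=> w; rewrite mass_add.
  - exact: mp.
  - by move=> y _; exact: ratio_cvg.
  - move=> y /(cyl_scons c) /hs h.
    have gp' : 0 < g (scons c y) by case/andP: (gp (scons c y)).
    by rewrite -(lnK gp') ler_expR.
rewrite -(expRK s) ler_ln ?posrE ?divr_gt0 ?expR_gt0 //.
by rewrite ler_pdivrMr.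
Qed.

Lemma lnratio_ge (R : realType) (A : finPointedType) (g : Xt A -> R)
  (mu : probability (XB A) R) (c : A) (v : seq A) (s : R) :
  g_function g -> compatible_g_measure g mu ->
  (forall y, cyl (c :: v) y -> s <= ln (g y)) ->
  s <= ln (mass mu (c :: v) / mass mu v).
Proof.
move=> [_ gp _] cm hs.
have [_ pos _] := cm.
have mp w := mass_pos w pos.
have key : - mass mu (c :: v) <= - expR s * mass mu v.
  apply: (@ratio_le R A (fun b => - mass mu (c :: b)) (mass mu) v
     (fun y => - g (scons c y)) (- expR s)).
  - by move=> w; rewrite mass_add sumrN.
  - by move=> w; rewrite mass_add.
  - exact: mp.
  - move=> y _.
    have -> : (fun n => - mass mu (c :: pfx y n) / mass mu (pfx y n)) =
        (fun n => - (mass mu (c :: pfx y n) / mass mu (pfx y n))).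
      by apply/funext => n; rewrite mulNr.
    by apply: cvgN; exact: ratio_cvg.
  - move=> y /(cyl_scons c) /hs h.
    have gp' : 0 < g (scons c y) by case/andP: (gp (scons c y)).
    by rewrite lerN2 -(lnK gp') ler_expR.
move: key; rewrite mulNr lerN2 => key.
rewrite -(expRK s) ler_ln ?posrE ?divr_gt0 ?expR_gt0 //.
by rewrite ler_pdivlMr.
Qed.

Definition good (R : realType) (A : finPointedType) (phi : Xt A -> R) (e : R)
  (w : seq A) := forall y z, cyl w y -> cyl w z -> `|phi y - phi z| <= e.

Lemma cyl_take (A : finPointedType) (w : seq A) n : cyl w `<=` cyl (take n w).
Proof.
move=> x /cylP h; apply/cylP => i; rewrite size_take_min leq_min => /andP[h1 h2].
by rewrite nth_take // h.
Qed.

Lemma cyl_pfx (A : finPointedType) (x : Xt A) n : cyl (pfx x n) x.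
Proof. by apply/cylP => i; rewrite size_prefix => hi; rewrite nth_prefix. Qed.

Lemma pfx_cvg (A : finPointedType) (x : Xt A) (Y : nat -> Xt A) :
  (forall n, cyl (pfx x n) (Y n)) -> Y @ \oo --> x.
Proof.
move=> hY.
apply/cvg_sup => N U [V] [[W] oW <-] WfN WU.
apply: (filterS WU); rewrite nbhs_simpl; exists N.+1 => // i /= hi.
have := hY i; move/cylP => /(_ N); rewrite size_prefix nth_prefix // => -> //.
Qed.

Lemma good_sub (R : realType) (A : finPointedType) (phi : Xt A -> R) e (u w : seq A) :
  cyl u `<=` cyl w -> good phi e w -> good phi e u.
Proof. by move=> s h y z /s hy /s hz; exact: h. Qed.

Lemma unif (R : realType) (A : finPointedType) (phi : Xt A -> R) :
  continuous phi -> forall e, 0 < e ->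
  exists l, forall w : seq A, size w = l -> good phi e w.
Proof.
move=> cphi e e0; apply: contrapT => nex.
have hb : forall l, exists w : seq A, size w = l /\ ~ good phi e w.
  move=> l; apply: contrapT => nw; apply: nex; exists l => w sw.
  by apply: contrapT => ng; apply: nw; exists w.
pose P (w : seq A) := forall k, exists u : seq A,
  [/\ size u = (size w + k)%N, take (size w) u = w & ~ good phi e u].
have P0 : P [::].
  by move=> k; have [w [sw nw]] := hb k; exists w; rewrite take0 sw.
have Ps : forall w, P w -> exists c, P (rcons w c).
  move=> w Pw; apply: contrapT => nc.
  have hk : forall c, exists k, forall u : seq A, size u = (size w).+1 + k ->
      take (size w).+1 u = rcons w c -> good phi e u.
    move=> c; apply: contrapT => nk; apply: nc; exists c => k.
    apply: contrapT => nu; apply: nk; exists k => u su tu.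
    apply: contrapT => ng; apply: nu; exists u; split => //; by rewrite size_rcons.
  have [K hK] := choice hk.
  pose M := (\max_(c : A) K c)%N.
  have [u [su tu nu]] := Pw M.+1.
  have hsu : (size w < size u)%N by rewrite su addnS ltnS leq_addr.
  pose c := nth point u (size w).
  pose u' := take ((size w).+1 + K c) u.
  apply: nu; apply: (good_sub (@cyl_take _ u ((size w).+1 + K c))).
  apply: hK.
    rewrite size_take_min su addnS -addSn; apply/minn_idPl.
    by rewrite leq_add2l leq_bigmax.
  rewrite take_takel ?leq_addr // (take_nth point hsu) tu. by [].
case: (@konig A P [::] P0 Ps) => x hx.
have bad : forall n, ~ good phi e (pfx x n).
  move=> n; have := hx n; rewrite /P /= add0n => /(_ 0%N) [u []].
  rewrite size_prefix addn0 => su.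
  by rewrite -{1}su take_size => ->.
have hyz : forall n, exists yz : Xt A * Xt A,
    [/\ cyl (pfx x n) yz.1, cyl (pfx x n) yz.2 & e < `|phi yz.1 - phi yz.2|].
  move=> n; apply: contrapT => nyz; apply: (bad n) => y z hy hz.
  rewrite leNgt; apply/negP => l; apply: nyz; by exists (y, z); split.
have [Y hY] := choice hyz.
have c1 : (fun n => phi (Y n).1) @ \oo --> phi x.
  apply: continuous_cvg; first exact: cphi.
  by apply: pfx_cvg => n; case: (hY n).
have c2 : (fun n => phi (Y n).2) @ \oo --> phi x.
  apply: continuous_cvg; first exact: cphi.
  by apply: pfx_cvg => n; case: (hY n).
have c3 : (fun n => phi (Y n).1 - phi (Y n).2) @ \oo --> phi x - phi x.
  exact: cvgB.
rewrite subrr in c3.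
have [N _ hN] := (proj1 (cvgrPdist_lt _ _) c3 e e0).
have := hN N (leqnn N); rewrite /= sub0r normrN.
by case: (hY N) => _ _ /lt_trans h /h; rewrite ltxx.
Qed.

Definition ext (A : finPointedType) (w : seq A) : Xt A := fun i => nth point w i.

Lemma cyl_ext (A : finPointedType) (w : seq A) : cyl w (ext w).
Proof. by apply/cylP. Qed.

Definition tup (A : finPointedType) (w : seq A) l (h : size w = l) : l.-tuple A :=
  @Tuple l A w (introT eqP h).

Lemma phi_bdd (R : realType) (A : finPointedType) (phi : Xt A -> R) :
  continuous phi -> exists M, forall y, `|phi y| <= M.
Proof.
move=> cphi; have [l hl] := unif cphi ltr01.
exists (\sum_(t : l.-tuple A) `|phi (ext t)| + 1) => y.
pose t := tup (size_prefix y l).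
have g1 := hl _ (size_prefix y l) y (ext t) (cyl_pfx y l) (cyl_ext _).
have h2 : `|phi y| <= `|phi y - phi (ext t)| + `|phi (ext t)|.
  by rewrite -{1}(subrK (phi (ext t)) (phi y)) ler_normD.
have h3 : `|phi (ext t)| <= \sum_(t : l.-tuple A) `|phi (ext t)|.
  by rewrite (bigD1 t) //= lerDl sumr_ge0.
lra.
Qed.

Lemma le_bigmax0 (R : realType) (T : finType) (F : T -> R) t :
  F t <= \big[Num.max/0]_(a : T) F a.
Proof.
have : forall r, t \in r -> F t <= \big[Num.max/0]_(a <- r) F a.
  elim => // a r ih; rewrite in_cons big_cons le_max => /orP [/eqP->|/ih->].
    by rewrite lexx.
  by rewrite orbT.
by apply; exact: mem_index_enum.
Qed.

Lemma bigmax0_le (R : realType) (T : finType) (F : T -> R) e :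
  0 <= e -> (forall t, F t <= e) -> \big[Num.max/0]_(a : T) F a <= e.
Proof.
move=> e0 hF; elim: (index_enum T) => [|a r ih]; first by rewrite big_nil.
by rewrite big_cons ge_max ih hF.
Qed.

Lemma bigmax0_ge0 (R : realType) (T : finType) (F : T -> R) :
  0 <= \big[Num.max/0]_(a : T) F a.
Proof.
elim: (index_enum T) => [|a r ih]; first by rewrite big_nil.
by rewrite big_cons le_max ih orbT.
Qed.

Lemma S_bnd (R : realType) (A : finPointedType) (phi : Xt A -> R) M (w : seq A) :
  (forall y, `|phi y| <= M) ->
  [/\ phi @` cyl w !=set0, has_ubound (phi @` cyl w) & has_lbound (phi @` cyl w)].
Proof.
move=> hM; split.
- by exists (phi (ext w)); exists (ext w) => //; exact: cyl_ext.
- by exists M => _ [y _ <-]; move: (hM y); rewrite ler_norml => /andP[].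
- by exists (- M) => _ [y _ <-]; move: (hM y); rewrite ler_norml => /andP[].
Qed.

Lemma in_S (R : realType) (A : finPointedType) (phi : Xt A -> R) M (w : seq A) y :
  (forall y, `|phi y| <= M) -> cyl w y ->
  inf (phi @` cyl w) <= phi y /\ phi y <= sup (phi @` cyl w).
Proof.
move=> hM hy; have [_ hu hl] := S_bnd w hM; split.
- by apply: ge_inf => //; exists y.
- by apply: ub_le_sup => //; exists y.
Qed.

Lemma var_ge (R : realType) (A : finPointedType) (phi : Xt A -> R) M (w : seq A) l y z :
  (forall y, `|phi y| <= M) -> size w = l -> cyl w y -> cyl w z ->
  phi y - phi z <= var l phi.
Proof.
move=> hM sw hy hz.
have [_ h1] := in_S hM hy; have [h2 _] := in_S hM hz.
have := le_bigmax0 (fun a : l.-tuple A => sup (phi @` cyl (a : seq A)) -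
   inf (phi @` cyl (a : seq A))) (tup sw).
rewrite /var /= => h3; lra.
Qed.

Lemma var_le (R : realType) (A : finPointedType) (phi : Xt A -> R) M l e :
  (forall y, `|phi y| <= M) -> 0 < e ->
  (forall w : seq A, size w = l -> good phi e w) -> var l phi <= e.
Proof.
move=> hM e0 hg; apply: bigmax0_le; first exact: ltW.
move=> t; have [ne hu hl] := S_bnd t hM.
have hs : forall z, cyl t z -> sup (phi @` cyl t) <= phi z + e.
  move=> z hz; apply: ge_sup => // _ [y hy <-].
  have := hg t (size_tuple t) y z hy hz.
  rewrite ler_norml => /andP[_]; lra.
have : sup (phi @` cyl t) - e <= inf (phi @` cyl t).
  apply: lb_le_inf => // _ [z hz <-]; have := hs z hz; lra.
lra.
Qed.

Lemma var_ge0 (R : realType) (A : finPointedType) (phi : Xt A -> R) l :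
  0 <= var l phi.
Proof. exact: bigmax0_ge0. Qed.

Lemma tele1 (R : realType) (T X : nat -> R) k : (forall j, T j != 0) ->
  T 0%N * \prod_(0 <= j < k) (X j / T j) = T k * \prod_(0 <= j < k) (X j / T j.+1).
Proof.
move=> hT; elim: k => [|k ih]; first by rewrite !big_geq.
rewrite !big_nat_recr //= mulrA ih.
have := hT k; have := hT k.+1 => h1 h2; field.
by rewrite h1 h2.
Qed.

Lemma tele2 (R : realType) (D : nat -> R) k : (forall j, D j != 0) ->
  D 0%N = D k * \prod_(0 <= j < k) (D j / D j.+1).
Proof.
move=> hD; elim: k => [|k ih]; first by rewrite big_geq // mulr1.
rewrite big_nat_recr //= ih.
have := hD k; have := hD k.+1 => h1 h2; field.
by rewrite h1.
Qed.

Lemma ln_prod (R : realType) (F : nat -> R) k : (forall j, 0 < F j) ->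
  ln (\prod_(0 <= j < k) F j) = \sum_(0 <= j < k) ln (F j).
Proof.
move=> hF; elim: k => [|k ih]; first by rewrite !big_geq // ln1.
rewrite !big_nat_recr //= lnM ?ih // posrE //; exact: prodr_gt0.
Qed.

Lemma take_cons_take (A : Type) (c : A) (s : seq A) l : (0 < l)%N ->
  take l (c :: take l s) = take l (c :: s).
Proof.
by case: l => [//|l'] _ /=; rewrite take_takel.
Qed.

Lemma rho_term (R : realType) (A : finPointedType) (g : Xt A -> R)
  (mu : probability (XB A) R) M l (a : seq A) :
  g_function g -> compatible_g_measure g mu ->
  (forall y, `|(@ln R \o g) y| <= M) -> (0 < l)%N -> (0 < size a)%N ->
  `|ln (markov_approx (mass mu) l a / mass mu a)| / (size a)%:R
    <= var l (@ln R \o g).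
Proof.
move=> hg cm hM l0 a0.
have [_ pos _] := cm.
have mp w : 0 < mass mu w := mass_pos w pos.
have V0 : 0 <= var l (@ln R \o g) := var_ge0 _ _.
have n0 : 0 < (size a)%:R :> R by rewrite ltr0n.
rewrite ler_pdivrMr //.
rewrite /markov_approx; case: ifP => hla.
  by rewrite divff ?gt_eqF // ln1 normr0 mulr_ge0 ?ler0n.
move/negbT: hla; rewrite -ltnNge => hla.
set k := (size a - l)%N.
pose T j := mass mu (take l (drop j a)).
pose X j := mass mu (take l.+1 (drop j a)).
pose D j := mass mu (drop j a).
have Tn j : T j != 0 by exact: lt0r_neq0 (mp _).
have Dn j : D j != 0 by exact: lt0r_neq0 (mp _).
have e1 : mass mu (take l a) * \prod_(0 <= j < k)
    (mass mu (take l.+1 (drop j a)) / mass mu (take l (drop j a))) =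
    D k * \prod_(0 <= j < k) (X j / T j.+1).
  have -> : mass mu (take l a) = T 0%N by rewrite /T drop0.
  rewrite (tele1 X k Tn); congr (_ * _).
  by rewrite /T /D take_oversize // size_drop /k subKn // ltnW.
have e2 : mass mu a = D k * \prod_(0 <= j < k) (D j / D j.+1).
  by rewrite -(tele2 k Dn) /D drop0.
have P1 : 0 < \prod_(0 <= j < k) (X j / T j.+1).
  by apply: prodr_gt0 => j _; apply: divr_gt0; apply: mp.
have P2 : 0 < \prod_(0 <= j < k) (D j / D j.+1).
  by apply: prodr_gt0 => j _; apply: divr_gt0; apply: mp.
have Dk : 0 < D k := mp _.
rewrite e1 e2 ln_div ?posrE ?mulr_gt0 // lnM ?posrE // lnM ?posrE //.
rewrite !ln_prod; last 2 first.
- by move=> j; apply: divr_gt0; apply: mp.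
- by move=> j; apply: divr_gt0; apply: mp.
have -> : ln (D k) + \sum_(0 <= j < k) ln (X j / T j.+1) -
    (ln (D k) + \sum_(0 <= j < k) ln (D j / D j.+1)) =
    \sum_(0 <= j < k) (ln (X j / T j.+1) - ln (D j / D j.+1)).
  by rewrite sumrB; ring.
apply: le_trans (ler_norm_sum _ _ _) _.
apply: (@le_trans _ _ (\sum_(0 <= j < k) var l (@ln R \o g))); last first.
  rewrite sumr_const_nat subn0 -[_ *+ k]mulr_natr; apply: ler_wpM2l => //; by rewrite ler_nat leq_subr.
apply: ler_sum_nat => j /andP [_ jk].
have ja : (j < size a)%N by move: jk; rewrite /k; lia.
set c := nth point a j.
have dj : drop j a = c :: drop j.+1 a := drop_nth point ja.
have sW : size (take l (drop j a)) = l.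
  by rewrite size_takel // size_drop; move: jk; rewrite /k; lia.
have hsi := le_bigmax0 (fun a0 : l.-tuple A => sup ((@ln R \o g) @` cyl (a0 : seq A)) -
   inf ((@ln R \o g) @` cyl (a0 : seq A))) (tup sW).
rewrite /= in hsi.
set W := take l (drop j a) in hsi sW.
have cW1 : cyl (c :: drop j.+1 a) `<=` cyl W.
  by rewrite /W dj; exact: cyl_take.
have cW2 : cyl (c :: take l (drop j.+1 a)) `<=` cyl W.
  rewrite /W dj -(take_cons_take c (drop j.+1 a) l0).
  exact: cyl_take.
have eX : X j = mass mu (c :: take l (drop j.+1 a)) by rewrite /X dj.
have eD : D j = mass mu (c :: drop j.+1 a) by rewrite /D dj.
have u1 : ln (X j / T j.+1) <= sup ((@ln R \o g) @` cyl W).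
  rewrite eX; apply: (lnratio_le (g:=g)) => // y /cW2 hy; exact: (in_S hM hy).2.
have l1 : inf ((@ln R \o g) @` cyl W) <= ln (X j / T j.+1).
  rewrite eX; apply: (lnratio_ge (g:=g)) => // y /cW2 hy; exact: (in_S hM hy).1.
have u2 : ln (D j / D j.+1) <= sup ((@ln R \o g) @` cyl W).
  rewrite eD; apply: (lnratio_le (g:=g)) => // y /cW1 hy; exact: (in_S hM hy).2.
have l2 : inf ((@ln R \o g) @` cyl W) <= ln (D j / D j.+1).
  rewrite eD; apply: (lnratio_ge (g:=g)) => // y /cW1 hy; exact: (in_S hM hy).1.
rewrite ler_norml; apply/andP; split; rewrite /var; lra.
Qed.

Theorem theorem3p1 (R : realType) (A : finPointedType) (g : Xt A -> R)
    (mu : probability (XB A) R) :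
  g_function g -> continuous g -> compatible_g_measure g mu ->
  (fun l : nat => rho (markov_approx (mass mu) l) (mass mu)) @ \oo --> 0%E /\
  (forall l : nat, (0 < l)%N ->
     (rho (markov_approx (mass mu) l) (mass mu) <= (var l (@ln R \o g))%:E)%E).
Proof.
move=> hg cg cm.
have [_ gp _] := hg.
have cphi : continuous (@ln R \o g).
  move=> x; apply: continuous_comp; first exact: cg.
  by apply: continuous_ln; case/andP: (gp x).
have [M hM] := phi_bdd cphi.
have bnd : forall l : nat, (0 < l)%N ->
    (rho (markov_approx (mass mu) l) (mass mu) <= (var l (@ln R \o g))%:E)%E.
  move=> l l0; apply: ge_ereal_sup => _ [a sa <-]; rewrite lee_fin.
  exact: (rho_term hg cm hM l0 sa).
split => //.
have rho0 : forall l, (0%E <= rho (markov_approx (mass mu) l) (mass mu))%E.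
  move=> l; apply: le_trans (ereal_sup_ubound _); last first.
    by exists [:: point].
  by rewrite lee_fin divr_ge0.
apply: (@squeeze_cvge _ _ _ _ (fun=> 0%E) _ (fun l => (var l (@ln R \o g))%:E)).
- by near=> l; rewrite rho0 /= bnd //; near: l; exists 1%N.
- exact: cvg_cst.
- apply: cvg_EFin; first by apply: nearW.
  apply/cvgrPdist_le => e e0.
  have [l0 hl0] := unif cphi e0.
  exists l0 => // l /= ll0.
  rewrite sub0r normrN ger0_norm ?var_ge0 //.
  apply: (var_le hM e0) => w sw.
  apply: (good_sub (@cyl_take _ w l0)); apply: hl0.
  by rewrite size_takel // sw.
Unshelve. all: end_near.
Qed.
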